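(* Let $p$ be a prime with $p\equiv\pm3\pmod 8$, $q=p^s$, let $m$ be an integer with $2^m\mid(q-1)$ and $m\ge 3$ if $p\equiv 3\pmod 8$, $m\ge 2$ if $p\equiv -3\pmod 8$, let $\lambda$ be a multiplicative character of order $2^m$ on $\mathbb F_q$, and let $n\ge1$. For $1\le r\le m$, $0\le t\le m$ and odd $c_0$ put $$W_{r,t}(c_0)=\sum_{\substack{j_0=1\\ 2\nmid j_0}}^{2^r-1}G(\lambda^{2^{m-r}j_0})\,\zeta_{2^{m-t}}^{2^{m-r}c_0j_0},\qquad S_t=\sum_{\substack{c_0=1\\2\nmid c_0}}^{2^{m-t}}\Bigl(\sum_{j=1}^{2^m-1} G(\lambda^j)\zeta_{2^{m-t}}^{c_0j}\Bigr)^n.$$ Then $$S_{m-1}+S_m=\Bigl(\sum_{r=1}^{m-1} W_{r,m}(1)+W_{m,m}(1)\Bigr)^n+\Bigl(\sum_{r=1}^{m-1} W_{r,m}(1)-W_{m,m}(1)\Bigr)^n.$$ If $p\equiv 3\pmod{8}$, then $S_{m-2}=2\cdot\bigl(\sum_{r=1}^{m-1} W_{r,m-2}(1)\bigr)^n$, and for $0\le t\le m-3$, $$S_t=2^{m-t-2}\Bigl[\Bigl(\sum_{r=1}^{t+1} W_{r,t}(1)+W_{t+3,t}(1)\Bigr)^n+\Bigl(\sum_{r=1}^{t+1} W_{r,t}(1)-W_{t+3,t}(1)\Bigr)^n\Bigr].$$ If $p\equiv -3\pmod{8}$ and $0\le t\le m-2$, then $$S_t=2^{m-t-2}\Bigl[\Bigl(\sum_{r=1}^{t+1}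 W_{r,t}(1)+W_{t+2,t}(1)\Bigr)^n+\Bigl(\sum_{r=1}^{t+1} W_{r,t}(1)-W_{t+2,t}(1)\Bigr)^n\Bigr].$$
   Context: Multiplicative characters are extended by $\psi(0)=0$; $\zeta_k=e^{2\pi i/k}$. The Gauss sum of a nontrivial character $\psi$ on $\mathbb F_q$ is $G(\psi)=\sum_{x\in\mathbb F_q}\psi(x)\zeta_p^{\mathrm{Tr}(x)}$, with $\mathrm{Tr}$ the trace from $\mathbb F_q$ to $\mathbb F_p$. *)

(* Defs.v *)
From HB Require Import structures.
From mathcomp Require Import all_boot all_order all_algebra all_field.
Set Implicit Arguments. Unset Strict Implicit. Unset Printing Implicit Defensive.
Import Order.TTheory GRing.Theory Num.Theory.
Local Open Scope ring_scope.

(* zeta k = e^{2 pi i / k}: k.-root (-1) is e^{i pi / k} (minimal nonnegative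
   argument among the k-th roots of -1), so its square is e^{2 pi i/k}. *)
Definition zeta (k : nat) : algC := (k.-root (-1)) ^+ 2.

Definition mulchar (F : finFieldType) (psi : F -> algC) : Prop :=
  [/\ psi 0 = 0, psi 1 = 1 & forall x y : F, psi (x * y) = psi x * psi y].

Definition chpow (F : finFieldType) (psi : F -> algC) (j : nat) : F -> algC :=
  fun x => if x == 0 then 0 else psi x ^+ j.

Definition char_trivial (F : finFieldType) (psi : F -> algC) : Prop :=
  forall x : F, x != 0 -> psi x = 1.

Definition char_order (F : finFieldType) (psi : F -> algC) (d : nat) : Prop :=
  [/\ (0 < d)%N, char_trivial (chpow psi d)
    & forall e, (0 < e < d)%N -> ~ char_trivial (chpow psi e)].

Definition trace (F : finFieldType) (p s : nat) (x : F) : F :=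
  \sum_(i < s) x ^+ (p ^ i).

Definition trace_nat (F : finFieldType) (p s : nat) (x : F) : nat :=
  if [pick k : 'I_p | trace p s x == (k : nat)%:R] is Some k then (k : nat) else 0%N.

Definition gauss (F : finFieldType) (p s : nat) (psi : F -> algC) : algC :=
  \sum_(x : F) psi x * zeta p ^+ trace_nat p s x.

Definition Wsum (F : finFieldType) (p s m : nat) (lam : F -> algC)
    (r t c0 : nat) : algC :=
  \sum_(1 <= j0 < 2 ^ r | odd j0)
     gauss p s (chpow lam (2 ^ (m - r) * j0)) *
     zeta (2 ^ (m - t)) ^+ (2 ^ (m - r) * c0 * j0).

Definition Ssum (F : finFieldType) (p s m : nat) (lam : F -> algC)
    (n t : nat) : algC :=
  \sum_(1 <= c0 < (2 ^ (m - t)).+1 | odd c0)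
     (\sum_(1 <= j < 2 ^ m) gauss p s (chpow lam j) *
        zeta (2 ^ (m - t)) ^+ (c0 * j)) ^+ n.

(* Main.v *)
Require Import Defs.
From HB Require Import structures.
From mathcomp Require Import all_boot all_order all_algebra all_field.
From mathcomp Require Import zify ring.
Set Implicit Arguments. Unset Strict Implicit. Unset Printing Implicit Defensive.
Import Order.TTheory GRing.Theory Num.Theory.
Local Open Scope ring_scope.


Lemma zeta_pow (K : nat) : zeta (2 ^ K) ^+ (2 ^ K) = 1.
Proof.
rewrite /zeta -exprM mulnC exprM rootCK ?expn_gt0 //.
by rewrite expr2 mulrNN mulr1.
Qed.

Lemma zeta_mod (K a : nat) : zeta (2 ^ K) ^+ a = zeta (2 ^ K) ^+ (a %% 2 ^ K).
Proof. by rewrite (expr_mod _ (zeta_pow K)). Qed.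

Lemma zeta_half (K u : nat) : (0 < K)%N -> odd u ->
  zeta (2 ^ K) ^+ (2 ^ K.-1 * u) = -1.
Proof.
move=> K0 ou; rewrite /zeta -exprM mulnA -expnS prednK //.
by rewrite exprM rootCK ?expn_gt0 // -signr_odd ou expr1.
Qed.

Lemma zeta_eqmod (K a b : nat) : a = b %[mod 2 ^ K] ->
  zeta (2 ^ K) ^+ a = zeta (2 ^ K) ^+ b.
Proof. by move=> h; rewrite zeta_mod h -zeta_mod. Qed.

Section Gauss.
Variables (F : finFieldType) (p s : nat) (lam : F -> algC).
Hypothesis pp : prime p.
Hypothesis pchF : p \in [pchar F].
Hypothesis lamM : mulchar lam.

Lemma trace_frob (x : F) : #|F| = (p ^ s)%N -> trace p s (x ^+ p) = trace p s x.
Proof.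
move=> cF; rewrite /trace.
have e1 := big_ord_recr s (fun i : 'I_s.+1 => x ^+ (p ^ i)).
have e2 := big_ord_recl s (fun i : 'I_s.+1 => x ^+ (p ^ i)).
rewrite /= in e1 e2.
have xs : x ^+ (p ^ s) = x by rewrite -cF expf_card.
rewrite xs expn0 expr1 in e1 e2.
have : \sum_(i < s) (x ^+ p) ^+ (p ^ i) = \sum_(i < s) x ^+ (p ^ bump 0 i).
  by apply: eq_bigr => i _; rewrite -exprM -expnS.
move=> ->; apply: (addrI x); rewrite -e2 e1 addrC //.
Qed.

Lemma lam_exp (x : F) k : lam (x ^+ k) = lam x ^+ k.
Proof.
case: lamM => _ l1 lM; elim: k => [|k IH]; first by rewrite !expr0.
by rewrite !exprS lM IH.
Qed.

Lemma gauss_frob e : #|F| = (p ^ s)%N ->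
  gauss p s (chpow lam (p * e)) = gauss p s (chpow lam e).
Proof.
move=> cF; have p0 : (0 < p)%N by apply: prime_gt0.
have inj : injective (fun x : F => x ^+ p).
  move=> x y /= exy; apply: (fmorph_inj (GRing.pFrobenius_aut pchF)).
  exact: exy.
rewrite /gauss [RHS](reindex_inj inj) /=; apply: eq_bigr => x _.
rewrite /trace_nat trace_frob //; congr (_ * _).
rewrite /chpow expf_eq0 p0 /=; case: (x == 0) => //.
by rewrite lam_exp -exprM.
Qed.
End Gauss.


Lemma sum_from1 (N : nat) (G : nat -> algC) :
  \sum_(1 <= j < N | odd j) G j = \sum_(j < N | odd j) G j.
Proof.
case: N => [|N]; first by rewrite big_geq // big_ord0.
by rewrite -big_mkord [RHS]big_mkcond [LHS]big_mkcond [RHS]big_ltn //= add0r.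
Qed.

Lemma odd_mod2r (r a : nat) : (0 < r)%N -> odd (a %% 2 ^ r) = odd a.
Proof.
move=> r0; apply: odd_mod.
by rewrite -(prednK r0) expnS oddM.
Qed.

Lemma sum_odd_reindex (r u : nat) (g : nat -> algC) :
  (0 < r)%N -> odd u -> (forall j, g (j %% 2 ^ r)%N = g j) ->
  \sum_(1 <= j < 2 ^ r | odd j) g (u * j)%N = \sum_(1 <= j < 2 ^ r | odd j) g j.
Proof.
move=> r0 ou gp; rewrite !sum_from1.
have N0 : (0 < 2 ^ r)%N by rewrite expn_gt0.
pose h (j : 'I_(2 ^ r)) := Ordinal (ltn_pmod (u * j) N0).
have inj : injective h.
  have key : forall a b : 'I_(2 ^ r), (a <= b)%N -> h a = h b -> a = b.
    move=> a b ab /(congr1 val) /= /eqP; rewrite eq_sym eqn_mod_dvd ?leq_mul2l ?ab ?orbT //.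
    rewrite -mulnBr Gauss_dvdr; last by rewrite coprimeXl // coprime2n.
    move=> d; apply: val_inj => /=; apply/eqP; rewrite eqn_leq ab /=.
    rewrite -subn_eq0; apply/negP => ne.
    have : (2 ^ r <= b - a)%N by apply: dvdn_leq => //; rewrite lt0n; apply/negP.
    by have := ltn_ord b; lia.
  by move=> a b e; case: (leqP a b) => ab; [apply: key | apply/esym/key; [apply: ltnW|]].
rewrite [RHS](reindex_inj inj) /=; apply: eq_big => j /=.
  by rewrite odd_mod2r // oddM ou.
by move=> _; rewrite gp.
Qed.

Lemma sum_split2 (N : nat) (h : nat -> algC) :
  \sum_(0 <= j < 2 * N) h j = \sum_(0 <= i < N) h (2 * i)%N + \sum_(0 <= i < N) h (2 * i + 1)%N.
Proof.
elim: N => [|N IH]; first by rewrite muln0 !big_geq // addr0.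
rewrite mulnS !add2n !big_nat_recr //= -add2n IH; rewrite addn1.
by rewrite -!addrA; congr (_ + _); rewrite addrCA.
Qed.

Lemma sum_oddpart (N : nat) (G : nat -> algC) :
  \sum_(j < 2 * N | odd j) G j = \sum_(0 <= i < N) G (2 * i + 1)%N.
Proof.
rewrite -big_mkord big_mkcond sum_split2 big1 ?add0r; last first.
  by move=> i _; rewrite oddM.
by apply: eq_bigr => i _; rewrite oddD oddM.
Qed.

Lemma decomp0 (m : nat) (h : nat -> algC) :
  \sum_(0 <= j < 2 ^ m) h j =
  h 0%N + \sum_(0 <= r < m) \sum_(0 <= i < 2 ^ r) h (2 ^ (m - r.+1) * (2 * i + 1))%N.
Proof.
elim: m h => [|m IH] h.
  by rewrite expn0 big_nat1 big_geq // addr0.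
rewrite expnS sum_split2 IH muln0 big_nat_recr // subnn expn0 addrA.
congr (_ + _ + _); last by apply: eq_bigr => i _; rewrite mul1n.
apply: eq_big_nat => r /andP[_ rm]; apply: eq_bigr => i _.
by rewrite mulnA -expnS subSS subnSK.
Qed.

Lemma decomp (m : nat) (h : nat -> algC) :
  \sum_(1 <= j < 2 ^ m) h j =
  \sum_(1 <= r < m.+1) \sum_(1 <= j0 < 2 ^ r | odd j0) h (2 ^ (m - r) * j0)%N.
Proof.
have := decomp0 m h; rewrite big_ltn ?expn_gt0 // => /addrI ->.
rewrite big_add1 /=; apply: eq_bigr => r _.
by rewrite sum_from1 expnS (sum_oddpart (2 ^ r) (fun j => h (2 ^ (m - r.+1) * j)%N)).
Qed.

Lemma count_odd (d M : nat) (phi : nat -> algC) : ~~ odd d ->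
  \sum_(1 <= c < (d * M).+1 | odd c) phi (c %% d)%N =
  (\sum_(0 <= c < d | odd c) phi c) *+ M.
Proof.
move=> ed; rewrite sum_from1 big_mkcond big_ord_recr /= oddM (negbTE ed) /= addr0.
rewrite -big_mkcond -(big_mkord (fun c => odd c) (fun c => phi (c %% d)%N)).
elim: M => [|M IH]; first by rewrite muln0 big_geq.
rewrite mulnS addnC (big_cat_nat _ (leq_addr d _)) //= IH mulrS addrC; congr (_ + _).
have := big_addn 0 (d * M + d) (d * M) (fun i => odd i) (fun i => phi (i %% d)%N).
rewrite add0n => ->; rewrite addKn big_mkcond [RHS]big_mkcond.
apply: eq_big_nat => i /andP[_ id].
by rewrite oddD oddM (negbTE ed) addbF mulnC addnC modnMDl modn_small.
Qed.

Lemma pow2_lift (a j u : nat) : (2 <= a)%N -> odd u ->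
  exists v, odd v /\ ((1 + 2 ^ a * u) ^ (2 ^ j) = 1 + 2 ^ (a + j) * v)%N.
Proof.
move=> a2 ou; elim: j => [|j [v [ov e]]].
  by exists u; rewrite expn0 expn1 addn0.
exists (v + 2 ^ (a + j).-1 * v ^ 2)%N; split.
  rewrite oddD ov oddM oddX.
  by have -> : ((a + j).-1 == 0%N) = false by apply/eqP; lia.
rewrite (expnSr 2 j) expnM e.
have h1 : (2 ^ (a + j) = 2 * 2 ^ (a + j).-1)%N by rewrite -expnS prednK //; lia.
rewrite addnS expnS h1; set X := (2 ^ (a + j).-1)%N.
rewrite !expnS ?expn1 ?expn0 ?muln1; lia.
Qed.

Lemma odd_shift (b v : nat) : odd v ->
  (1 + 2 ^ b * v = 1 + 2 ^ b %[mod 2 ^ b.+1])%N.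
Proof.
move=> ov; rewrite -(odd_double_half v) ov -addnn.
have -> : (1 + 2 ^ b * (true + (v./2 + v./2)) = (v./2) * 2 ^ b.+1 + (1 + 2 ^ b))%N.
  by rewrite expnS /=; lia.
by rewrite modnMDl.
Qed.

Lemma exE3 (p k : nat) : (p %% 8 = 3)%N -> (2 <= k)%N -> (k != 3)%N ->
  exists E, (p ^ E = 1 + 2 ^ k.-1 %[mod 2 ^ k])%N.
Proof.
move=> p3 k2 k3.
have [q pq] : exists q, p = (8 * q + 3)%N by exists (p %/ 8)%N; rewrite {1}(divn_eq p 8) p3; lia.
case: (ltngtP k 3) => [k3' | k4 | ke]; last by rewrite ke in k3.
  have -> : k = 2 by lia.
  exists 1%N; rewrite expn1 pq /=.
  have -> : (8 * q + 3 = (2 * q) * 4 + 3)%N by lia.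
  by rewrite modnMDl.
have ou : odd (8 * q ^ 2 + 6 * q + 1) by rewrite oddD oddD !oddM.
have [v [ov e]] := pow2_lift (k - 4) (isT : (2 <= 3)%N) ou.
exists (2 * 2 ^ (k - 4))%N.
rewrite expnM.
have -> : (p ^ 2 = 1 + 2 ^ 3 * (8 * q ^ 2 + 6 * q + 1))%N.
  by rewrite pq !expnS !expn0 !muln1; lia.
rewrite e.
have -> : (3 + (k - 4) = k.-1)%N by lia.
by rewrite -(prednK (_ : 0 < k)%N) ?odd_shift //; lia.
Qed.

Lemma exE5 (p k : nat) : (p %% 8 = 5)%N -> (3 <= k)%N ->
  exists E, (p ^ E = 1 + 2 ^ k.-1 %[mod 2 ^ k])%N.
Proof.
move=> p5 k3.
have [q pq] : exists q, p = (8 * q + 5)%N by exists (p %/ 8)%N; rewrite {1}(divn_eq p 8) p5; lia.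
have ou : odd (2 * q + 1) by rewrite oddD oddM.
have [v [ov e]] := pow2_lift (k - 3) (isT : (2 <= 2)%N) ou.
exists (2 ^ (k - 3))%N.
have -> : (p = 1 + 2 ^ 2 * (2 * q + 1))%N by rewrite pq !expnS expn0; lia.
rewrite e.
have -> : (2 + (k - 3) = k.-1)%N by lia.
by rewrite -(prednK (_ : 0 < k)%N) ?odd_shift //; lia.
Qed.


Lemma modn_weaken (d d' x y : nat) : (d %| d')%N -> (x = y %[mod d'])%N -> (x = y %[mod d])%N.
Proof. by move=> dd e; rewrite -(modn_dvdm x dd) e modn_dvdm. Qed.

Section WLemmas.
Variables (F : finFieldType) (p s m : nat) (lam : F -> algC).
Hypothesis pp : prime p.
Hypothesis op : odd p.
Hypothesis pchF : p \in [pchar F].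
Hypothesis cF : #|F| = (p ^ s)%N.
Hypothesis lamM : mulchar lam.
Hypothesis lam1 : forall x, x != 0 -> lam x ^+ (2 ^ m) = 1.

Local Notation W := (Wsum p s m lam).

Lemma gauss_mod a : gauss p s (chpow lam (a %% 2 ^ m)) = gauss p s (chpow lam a).
Proof.
rewrite /gauss; apply: eq_bigr => x _; rewrite /chpow.
by case: eqP => // /eqP x0; rewrite (expr_mod _ (lam1 x0)).
Qed.

Lemma W_mod r t c c' : (t <= r <= m)%N -> (c = c' %[mod 2 ^ (r - t)])%N ->
  W r t c = W r t c'.
Proof.
move=> /andP[tr rm] h; rewrite /Wsum; apply: eq_bigr => j0 _; congr (_ * _).
apply: zeta_eqmod.
have -> : (m - t = (m - r) + (r - t))%N by lia.
rewrite expnD -!mulnA -!muln_modr; congr (_ * _)%N.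
by rewrite -modnMml h modnMml.
Qed.

Lemma W_low r t c : (r <= t.+1)%N -> odd c -> W r t c = W r t 1.
Proof.
move=> rt oc; rewrite /Wsum; apply: eq_bigr => j0 _; congr (_ * _).
apply: zeta_eqmod.
have : (2 ^ (m - t) %| 2 ^ (m - r) * 2)%N by rewrite -expnSr dvdn_exp2l //; lia.
case/dvdnP => q eq.
have [w cw] : exists w, c = (1 + 2 * w)%N.
  by exists c./2; rewrite -{1}(odd_double_half c) oc -mul2n.
have -> : (2 ^ (m - r) * c * j0 = (q * w * j0) * 2 ^ (m - t) + 2 ^ (m - r) * 1 * j0)%N.
  rewrite cw; set X := (2 ^ (m - r))%N; set D := (2 ^ (m - t))%N; nia.
by rewrite modnMDl.
Qed.

Lemma W_neg r t c : (t < r <= m)%N -> odd c ->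
  W r t (c * (1 + 2 ^ (r - t).-1))%N = - W r t c.
Proof.
move=> /andP[tr rm] oc; rewrite /Wsum -sumrN; apply: eq_big => // j0 oj.
rewrite -mulrN; congr (_ * _).
have e : (2 ^ (m - t).-1 = 2 ^ (m - r) * 2 ^ (r - t).-1)%N by rewrite -expnD; congr (_ ^ _)%N; lia.
have -> : (2 ^ (m - r) * (c * (1 + 2 ^ (r - t).-1)) * j0 =
   2 ^ (m - r) * c * j0 + 2 ^ (m - t).-1 * (c * j0))%N.
  rewrite e; set X := (2 ^ (m - r))%N; set Y := (2 ^ (r - t).-1)%N; nia.
rewrite exprD zeta_half ?mulrN1 //; first lia.
by rewrite oddM oc.
Qed.

Lemma W_p r t c : (0 < r <= m)%N -> W r t (c * p)%N = W r t c.
Proof.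
move=> /andP[r0 rm].
pose g j := gauss p s (chpow lam (2 ^ (m - r) * j)) * zeta (2 ^ (m - t)) ^+ (2 ^ (m - r) * c * j).
have -> : W r t (c * p)%N = \sum_(1 <= j0 < 2 ^ r | odd j0) g (p * j0)%N.
  apply: eq_bigr => j0 _; rewrite /g; congr (_ * _).
    by rewrite mulnCA gauss_frob.
  by congr (_ ^+ _); lia.
rewrite sum_odd_reindex //.
move=> j; rewrite /g; congr (_ * _).
  by rewrite muln_modr -expnD subnK // gauss_mod.
apply: zeta_eqmod; apply: (@modn_weaken _ (2 ^ m)%N); first by rewrite dvdn_exp2l // leq_subr.
have jd := divn_eq j (2 ^ r).
have e : (2 ^ m = 2 ^ (m - r) * 2 ^ r)%N by rewrite -expnD subnK.
have -> : (2 ^ (m - r) * c * j = (j %/ 2 ^ r * c) * 2 ^ m + 2 ^ (m - r) * c * (j %% 2 ^ r))%N.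
  rewrite e; move: jd; set A := (j %/ 2 ^ r)%N; set B := (j %% 2 ^ r)%N.
  set X := (2 ^ (m - r))%N; set Y := (2 ^ r)%N => jd; rewrite {1}jd; nia.
by rewrite modnMDl.
Qed.

Lemma W_pE r t c E : (0 < r <= m)%N -> W r t (c * p ^ E)%N = W r t c.
Proof.
move=> h; elim: E => [|E IH]; first by rewrite expn0 muln1.
by rewrite expnSr mulnA W_p.
Qed.

Lemma W_zero r t c : (t < r <= m)%N -> odd c ->
  (exists E, (p ^ E = 1 + 2 ^ (r - t).-1 %[mod 2 ^ (r - t)])%N) -> W r t c = 0.
Proof.
move=> /andP[tr rm] oc [E hE].
have h1 : W r t c = - W r t c.
  rewrite -W_neg ?tr ?rm // -(@W_pE r t c E) ?rm ?(leq_ltn_trans _ tr) //.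
  apply: W_mod; first by rewrite rm ltnW.
  by rewrite -modnMmr hE modnMmr.
apply/eqP; move/eqP: h1; rewrite -subr_eq0 opprK -mulr2n mulrn_eq0 /=.
by [].
Qed.

End WLemmas.


Lemma sum8 (phi : nat -> algC) :
  \sum_(0 <= c < 8 | odd c) phi c = phi 1%N + phi 3%N + phi 5%N + phi 7%N.
Proof. by rewrite big_mkcond !big_nat_recr //= big_geq // !(add0r, addr0). Qed.

Lemma sum4 (phi : nat -> algC) :
  \sum_(0 <= c < 4 | odd c) phi c = phi 1%N + phi 3%N.
Proof. by rewrite big_mkcond !big_nat_recr //= big_geq // !(add0r, addr0). Qed.

Lemma S_eq (F : finFieldType) (p s m : nat) (lam : F -> algC) n t :
  Ssum p s m lam n t =
  \sum_(1 <= c < (2 ^ (m - t)).+1 | odd c) (\sum_(1 <= r < m.+1) Wsum p s m lam r t c) ^+ n.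
Proof.
apply: eq_bigr => c _; rewrite decomp; congr (_ ^+ _).
apply: eq_bigr => r _; apply: eq_bigr => j0 _; congr (_ * _).
by rewrite mulnCA mulnA.
Qed.

Unset Implicit Arguments.

Theorem corollary1 (p s : nat) (F : finFieldType) (m : nat) (lam : F -> algC) (n : nat) :
  prime p -> (p %% 8 = 3 \/ p %% 8 = 5)%N ->
  p \in [pchar F] -> #|F| = (p ^ s)%N ->
  (2 ^ m %| #|F| - 1)%N ->
  (p %% 8 = 3 -> 3 <= m)%N -> (p %% 8 = 5 -> 2 <= m)%N ->
  mulchar lam -> char_order lam (2 ^ m) ->
  (1 <= n)%N ->
  let W := Wsum p s m lam in
  let S := Ssum p s m lam n in
  [/\ S (m - 1)%N + S m =
        (\sum_(1 <= r < m) W r m 1%N + W m m 1%N) ^+ n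
      + (\sum_(1 <= r < m) W r m 1%N - W m m 1%N) ^+ n,
      (p %% 8 = 3)%N ->
        S (m - 2)%N = 2 * (\sum_(1 <= r < m) W r (m - 2)%N 1%N) ^+ n
        /\ forall t : nat, (t <= m - 3)%N ->
             S t = (2 ^ (m - t - 2))%:R *
               ((\sum_(1 <= r < t.+2) W r t 1%N + W (t + 3)%N t 1%N) ^+ n
              + (\sum_(1 <= r < t.+2) W r t 1%N - W (t + 3)%N t 1%N) ^+ n)
    & (p %% 8 = 5)%N ->
        forall t : nat, (t <= m - 2)%N ->
             S t = (2 ^ (m - t - 2))%:R *
               ((\sum_(1 <= r < t.+2) W r t 1%N + W (t + 2)%N t 1%N) ^+ n
              + (\sum_(1 <= r < t.+2) W r t 1%N - W (t + 2)%N t 1%N) ^+ n)].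
Proof.
move=> pp p35 pchF cF _ h3 h5 lamM ord _ W S.
have op : odd p.
  by rewrite -(@odd_mod p 8 erefl); case: p35 => ->.
have m2 : (2 <= m)%N by case: p35 => e; [have := h3 e | have := h5 e]; lia.
have lam1 : forall x, x != 0 -> lam x ^+ (2 ^ m) = 1.
  by case: ord => _ triv _ x x0; have := triv x x0; rewrite /chpow (negbTE x0).
pose G r := \sum_(1 <= j0 < 2 ^ r | odd j0) gauss p s (chpow lam (2 ^ (m - r) * j0)).
have WmG r c : W r m c = G r.
  apply: eq_bigr => j0 _; by rewrite subnn zeta_mod modn1 expr0 mulr1.
split.
-
  have Sm : S m = (\sum_(1 <= r < m.+1) W r m 1%N) ^+ n.
    by rewrite /S S_eq subnn expn0 big_mkcond big_nat1.
  have Sm1 : S (m - 1)%N = (\sum_(1 <= r < m.+1) W r (m - 1)%N 1%N) ^+ n.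
    rewrite /S S_eq.
    have -> : (m - (m - 1) = 1)%N by lia.
    by rewrite expn1 big_mkcond (big_nat_recr 2) // (big_nat_recr 1) // big_geq //= add0r addr0.
  rewrite Sm Sm1.
  rewrite addrC; congr (_ + _).
    by rewrite big_nat_recr //; lia.
  rewrite big_nat_recr //; last lia.
  rewrite WmG; congr ((_ + _) ^+ _).
    apply: eq_big_nat => r /andP[r1 rm]; rewrite WmG; apply: eq_bigr => j0 _.
    rewrite zeta_mod.
    have /eqP -> : (2 ^ (m - (m - 1)) %| 2 ^ (m - r) * 1 * j0)%N.
      by rewrite -mulnA dvdn_mulr // dvdn_exp2l //; lia.
    by rewrite expr0 mulr1.
  rewrite /W /Wsum -sumrN; apply: eq_big => // j0 oj.
  have -> : (m - (m - 1) = 1)%N by lia.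
  by rewrite subnn muln1 (zeta_half (isT : (0 < 1)%N) oj) mulrN1.
-
  move=> p3; have m3 := h3 p3; split.
    rewrite /S S_eq.
    have -> : (m - (m - 2) = 2)%N by lia.
    pose A := \sum_(1 <= r < m) W r (m - 2)%N 1%N.
    have inner c : odd c -> \sum_(1 <= r < m.+1) W r (m - 2)%N c = A.
      move=> oc; rewrite /W big_nat_recr //=; last lia.
      rewrite (W_zero pp op pchF cF lamM lam1); last first.
      + have -> : (m - (m - 2) = 2)%N by lia.
        by apply: exE3.
      + by [].
      + by apply/andP; split => //; lia.
      rewrite addr0; apply: eq_big_nat => r /andP[_ rm].
      by apply: (W_low m lam pp op pchF cF) => //; lia.
    rewrite (eq_bigr (fun c => A ^+ n)); last first.
      by move=> c oc; rewrite inner.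
    have E := count_odd 1 (fun _ => A ^+ n) (isT : ~~ odd 4).
    rewrite sum4 muln1 mulr1n in E.
    by rewrite mulr_natl mulr2n -E.
  move=> t tm.
  rewrite /S S_eq.
  pose A := \sum_(1 <= r < t.+2) W r t 1%N.
  pose B c := W (t + 3)%N t c.
  have inner c : odd c -> \sum_(1 <= r < m.+1) W r t c = A + B (c %% 8)%N.
    move=> oc; rewrite /W (@big_cat_nat _ _ _ t.+2 1 m.+1) //=; last lia.
    congr (_ + _).
      apply: eq_big_nat => r /andP[_ rm].
      by apply: (W_low m lam pp op pchF cF) => //; lia.
    rewrite big_ltn; last lia.
    have Z2 : Wsum p s m lam t.+2 t c = 0.
      apply: (W_zero pp op pchF cF lamM lam1) => //; first by apply/andP; split; lia.
      by apply: exE3 => //; lia.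
    rewrite Z2 add0r.
    rewrite big_ltn; last lia.
    rewrite big_nat_cond big1 ?addr0; last first.
      move=> r /andP[/andP[r4 rm] _].
      apply: (W_zero pp op pchF cF lamM lam1) => //; first by apply/andP; split; lia.
      by apply: exE3 => //; lia.
    rewrite /B /W addn3; apply: (W_mod lam pp op pchF cF); first by apply/andP; split; lia.
    by rewrite -addn3 addKn modn_mod.
  rewrite (eq_bigr (fun c => (A + B (c %% 8)%N) ^+ n)); last first.
    by move=> c oc; rewrite inner.
  have -> : (2 ^ (m - t) = 8 * 2 ^ (m - t - 3))%N.
    by rewrite -(expnD 2 3); congr (_ ^ _)%N; lia.
  rewrite (count_odd _ (fun d => (A + B d) ^+ n)) // sum8 /=.
  have B3 : B 3%N = B 1%N.
    rewrite /B /W -(W_p pp op pchF cF lamM lam1 t 1%N); last by apply/andP; split; lia.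
    apply: (W_mod lam pp op pchF cF); first by apply/andP; split; lia.
    by rewrite addKn mul1n p3.
  have B5 : B 5%N = - B 1%N.
    rewrite /B /W -(W_neg lam pp op pchF cF); last by [].
      by rewrite addKn.
    by apply/andP; split; lia.
  have B7 : B 7%N = B 5%N.
    rewrite /B /W -(W_p pp op pchF cF lamM lam1 t 5%N); last by apply/andP; split; lia.
    apply: (W_mod lam pp op pchF cF); first by apply/andP; split; lia.
    by rewrite addKn -modnMmr p3.
  rewrite B3 B7 B5.
  have -> : (2 ^ (m - t - 2) = 2 * 2 ^ (m - t - 3))%N.
    by rewrite -expnS; congr (_ ^ _)%N; lia.
  rewrite -mulr_natl natrM; rewrite /A; ring.
-
  move=> p5 t tm.
  rewrite /S S_eq.
  pose A := \sum_(1 <= r < t.+2) W r t 1%N.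
  pose B c := W (t + 2)%N t c.
  have inner c : odd c -> \sum_(1 <= r < m.+1) W r t c = A + B (c %% 4)%N.
    move=> oc; rewrite /W (@big_cat_nat _ _ _ t.+2 1 m.+1) //=; last lia.
    congr (_ + _).
      apply: eq_big_nat => r /andP[_ rm].
      by apply: (W_low m lam pp op pchF cF) => //; lia.
    rewrite big_ltn; last lia.
    rewrite big_nat_cond big1 ?addr0; last first.
      move=> r /andP[/andP[r4 rm] _].
      apply: (W_zero pp op pchF cF lamM lam1) => //; first by apply/andP; split; lia.
      by apply: exE5 => //; lia.
    rewrite /B /W addn2; apply: (W_mod lam pp op pchF cF); first by apply/andP; split; lia.
    have -> : (t.+2 - t = 2)%N by lia.
    by rewrite modn_mod.
  rewrite (eq_bigr (fun c => (A + B (c %% 4)%N) ^+ n)); last first.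
    by move=> c oc; rewrite inner.
  have -> : (2 ^ (m - t) = 4 * 2 ^ (m - t - 2))%N.
    by rewrite -(expnD 2 2); congr (_ ^ _)%N; lia.
  rewrite (count_odd _ (fun d => (A + B d) ^+ n)) // sum4 /=.
  have B3 : B 3%N = - B 1%N.
    rewrite /B /W -(W_neg lam pp op pchF cF); last by [].
      by rewrite addKn.
    by apply/andP; split; lia.
  rewrite B3 -mulr_natl; rewrite /A; ring.
Qed.
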